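(* Let $\mathcal{X}$ be a finite set, $\pi$ a probability mass function on $\mathcal{X}$ with full support, and $P$ an ergodic $\pi$-reversible transition matrix all of whose eigenvalues are non-negative. Let a group $\mathcal{G}$ act on $\mathcal{X}$, and let $G$, $M$, $B$ be the associated Gibbs, Metropolis–Hastings and Barker orbit kernels. Then $V(GPG)\le V(MPM)\le V(P)$ and $V(GPG)\le V(BPB)\le V(P)$.
   Context: With $\mathcal{O}(x)$ the orbit of $x$: $G(x,y)=\pi(y)/\pi(\mathcal{O}(x))$ for $y\in\mathcal{O}(x)$, else $0$; $M(x,y)=\frac{1}{|\mathcal{O}(x)|-1}\min\{1,\pi(y)/\pi(x)\}$ for $y\in\mathcal{O}(x)\setminus\{x\}$, $0$ off the orbit, $M(x,x)=1-\sum_{y\ne x}M(x,y)$; $B$ is the same with acceptance $\pi(y)/(\pi(x)+\pi(y))$. For $f\in\ell^2_0(\pi)=\{f:\sum_xf(x)\pi(x)=0\}$, $v(f,K)=\lim_n\frac1n\mathrm{Var}(\sum_{i=1}^nf(X_i))$ is the asymptotic variance under the $\pi$-stationary kernel $K$, and the worst-case asymptotic variance is $V(K)=\sup\{v(f,K):f\in\ell^2_0(\pi),\ \|f\|_\pi=1\}$, where $\|f\|_\pi^2=\sum_xf(x)^2\pi(x)$; for reversible $K$ this equals $(1+\lambda_2(K))/(1-\lambda_2(K))$ with $\lambda_2$ the second largest eigenvalue. *)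

(* Defs.v *)
From HB Require Import structures.
From mathcomp Require Import all_boot all_order all_algebra.
From mathcomp Require Import boolp classical_sets reals ereal topology normedtype sequences.
Set Implicit Arguments. Unset Strict Implicit. Unset Printing Implicit Defensive.
Import Order.TTheory GRing.Theory Num.Theory.
Local Open Scope ring_scope.

(* State space X = 'I_n ; kernels are n x n matrices, K x y = K(x,y). *)
Section Defs.
Variables (R : realType) (n : nat).

Definition full_support_pmf (pi : 'I_n -> R) : Prop :=
  (forall x, 0 < pi x) /\ \sum_x pi x = 1.

Definition stochastic (K : 'M[R]_n) : Prop :=
  (forall x y, 0 <= K x y) /\ (forall x, \sum_y K x y = 1).

Definition reversible (pi : 'I_n -> R) (K : 'M[R]_n) : Prop :=
  forall x y, pi x * K x y = pi y * K y x.

(* ergodic (finite state space): irreducible and aperiodic, i.e. some power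
   of K has all entries positive *)
Definition ergodic (K : 'M[R]_n) : Prop :=
  exists k : nat, forall x y, 0 < (K ^+ k) x y.

(* all (complex) eigenvalues nonnegative; for a pi-reversible matrix all
   eigenvalues are real, so it suffices to quantify over real eigenvalues *)
Definition nonneg_spectrum (K : 'M[R]_n) : Prop :=
  forall a : R, eigenvalue K a -> 0 <= a.

Definition is_group (Gt : Type) (mul : Gt -> Gt -> Gt) (one : Gt)
  (inv : Gt -> Gt) : Prop :=
  [/\ forall a b c, mul a (mul b c) = mul (mul a b) c,
      forall a, mul one a = a, forall a, mul a one = a,
      forall a, mul (inv a) a = one & forall a, mul a (inv a) = one].

Definition is_action (Gt : Type) (mul : Gt -> Gt -> Gt) (one : Gt)
  (act : Gt -> 'I_n -> 'I_n) : Prop :=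
  (forall x, act one x = x) /\ (forall g h x, act (mul g h) x = act g (act h x)).

Definition orbit_of (Gt : Type) (act : Gt -> 'I_n -> 'I_n) (x : 'I_n)
  : {set 'I_n} :=
  [set y | `[< exists g, act g x = y >]].

Definition gibbs_kernel (pi : 'I_n -> R) (O : 'I_n -> {set 'I_n}) : 'M[R]_n :=
  \matrix_(x, y) (if y \in O x then pi y / \sum_(z in O x) pi z else 0).

Definition orbit_mh_kernel (acc : R -> R -> R) (pi : 'I_n -> R)
  (O : 'I_n -> {set 'I_n}) : 'M[R]_n :=
  let off x y := if (y \in O x) && (y != x)
                 then (#|O x|.-1)%:R^-1 * acc (pi x) (pi y) else 0 in
  \matrix_(x, y) (if y == x then 1 - \sum_(z | z != x) off x z else off x y).

Definition metropolis_kernel pi O :=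
  orbit_mh_kernel (fun px py => Num.min 1 (py / px)) pi O.

Definition barker_kernel pi O :=
  orbit_mh_kernel (fun px py => py / (px + py)) pi O.

(* Var(sum_{i=1}^N f(X_i)) for the stationary chain X_1 ~ pi driven by K:
   E[f(X_i) f(X_j)] = sum_{x,y} pi x f x (K^|i-j|) x y f y. *)
Definition var_sum (pi : 'I_n -> R) (K : 'M[R]_n) (f : 'I_n -> R) (N : nat) : R :=
  \sum_(i < N) \sum_(j < N) \sum_x \sum_y
      pi x * f x * (K ^+ (maxn i j - minn i j)) x y * f y
  - (N%:R * \sum_x f x * pi x) ^+ 2.

Definition asym_var (pi : 'I_n -> R) (K : 'M[R]_n) (f : 'I_n -> R) : \bar R :=
  limn (fun N : nat => ((var_sum pi K f N) / N%:R)%:E).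

Definition mean_zero (pi : 'I_n -> R) (f : 'I_n -> R) : Prop :=
  \sum_x f x * pi x = 0.

Definition pi_norm2 (pi : 'I_n -> R) (f : 'I_n -> R) : R :=
  \sum_x f x ^+ 2 * pi x.

Definition worst_var (pi : 'I_n -> R) (K : 'M[R]_n) : \bar R :=
  ereal_sup [set asym_var pi K f | f in
              [set f : 'I_n -> R | mean_zero pi f /\ pi_norm2 pi f = 1]].

End Defs.

(* Main.v *)
Require Import Defs.
From HB Require Import structures.
From mathcomp Require Import all_boot all_order all_algebra.
From mathcomp Require Import boolp classical_sets reals ereal.
Import Order.TTheory GRing.Theory Num.Theory.
Local Open Scope ring_scope.
From mathcomp Require Import topology normedtype sequences derive.
From mathcomp.algebra_tactics Require Import ring lra.
Import numFieldNormedType.Exports.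
Set Implicit Arguments. Unset Strict Implicit. Unset Printing Implicit Defensive.

Section Alg.
Variables (R : realType) (n : nat) (pi : 'I_n -> R).

Definition ip (u v : 'I_n -> R) : R := \sum_x pi x * u x * v x.
Definition app (K : 'M[R]_n) (v : 'I_n -> R) : 'I_n -> R :=
  fun x => \sum_y K x y * v y.
Definition lc (t : R) (u v : 'I_n -> R) : 'I_n -> R := fun x => t * u x + v x.

Lemma app_mul A B v : app (A *m B) v = app A (app B v).
Proof.
apply: funext => x; rewrite /app.
under eq_bigr do rewrite mxE big_distrl /=.
rewrite exchange_big /=; apply: eq_bigr => z _.
rewrite big_distrr /=; apply: eq_bigr => y _; by rewrite mulrA.
Qed.

Lemma app1 v : app 1 v = v.
Proof.
apply: funext => x; rewrite /app (bigD1 x) //= big1 ?addr0.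
  by rewrite mxE eqxx mul1r.
by move=> y yx; rewrite mxE eq_sym (negbTE yx) mul0r.
Qed.

Lemma app_exp K m v : app (K ^+ m.+1) v = app K (app (K ^+ m) v).
Proof. by rewrite exprS -mulmxE app_mul. Qed.

Lemma app_lc K t u v : app K (lc t u v) = lc t (app K u) (app K v).
Proof.
apply: funext => x; rewrite /app /lc mulr_sumr -big_split /=.
by apply: eq_bigr => y _; ring.
Qed.

Lemma ip_sym u v : ip u v = ip v u.
Proof. by apply: eq_bigr => x _; ring. Qed.

Lemma ip_lcl t u v w : ip (lc t u v) w = t * ip u w + ip v w.
Proof. by rewrite /ip /lc mulr_sumr -big_split /=; apply: eq_bigr => x _; ring. Qed.

Lemma ip_lcr t u v w : ip w (lc t u v) = t * ip w u + ip w v.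
Proof. by rewrite ip_sym ip_lcl !(ip_sym w). Qed.

Definition SA (K : 'M[R]_n) := forall u v, ip (app K u) v = ip u (app K v).
Definition PSD (K : 'M[R]_n) := forall u, 0 <= ip u (app K u).

Lemma quad_cs (a c d : R) : 0 <= a -> (forall t, 0 <= a * t ^+ 2 + 2 * d * t + c) ->
  d ^+ 2 <= a * c.
Proof.
move=> a0 H; have [ap|] := ltrP 0 a.
  have := H (- d / a).
  have -> : a * (- d / a) ^+ 2 + 2 * d * (- d / a) + c = c - d ^+ 2 / a.
    by field; rewrite gt_eqF.
  rewrite subr_ge0 ler_pdivrMr // => h; by rewrite mulrC.
move=> a_le0; have a00 : a = 0 by apply/eqP; rewrite eq_le a_le0 a0.
subst a; have [d0|dn0] := eqVneq d 0.
  by rewrite d0 expr0n /= mul0r.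
have := H (- (c + 1) / (2 * d)).
have -> : 0 * (- (c + 1) / (2 * d)) ^+ 2 + 2 * d * (- (c + 1) / (2 * d)) + c = -1.
  field; rewrite ?dn0 ?andbT //=; exact: pnatr_eq0.
by move=> h; have := le_lt_trans h (ltrN10 R); rewrite ltxx.
Qed.

Lemma cs K u v : SA K -> PSD K ->
  ip u (app K v) ^+ 2 <= ip u (app K u) * ip v (app K v).
Proof.
move=> sa psd; apply: quad_cs => // t.
have := psd (lc t u v); rewrite app_lc ip_lcl !ip_lcr.
have -> : ip v (app K u) = ip u (app K v) by rewrite -sa ip_sym.
move=> h; apply: (le_trans h); rewrite le_eqVlt; apply/orP; left; apply/eqP; ring.
Qed.


Hypothesis pi_pos : forall x, 0 < pi x.

Lemma ip_ge0 u : 0 <= ip u u.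
Proof.
by apply: sumr_ge0 => x _; rewrite -mulrA; apply: mulr_ge0; [exact: ltW | rewrite -expr2 sqr_ge0].
Qed.

Lemma ip_eq0 u : ip u u = 0 -> forall x, u x = 0.
Proof.
move=> h x; have := h; rewrite /ip => /eqP; rewrite psumr_eq0.
  move=> /allP /(_ x (mem_index_enum x)) /=; rewrite -mulrA mulf_eq0 gt_eqF //=.
  by rewrite mulf_eq0 orbb => /eqP.
by move=> y _; rewrite -mulrA; apply: mulr_ge0; [exact: ltW | rewrite -expr2 sqr_ge0].
Qed.

Lemma SA1 : SA 1.
Proof. by move=> u v; rewrite !app1. Qed.

Lemma PSD1 : PSD 1.
Proof. by move=> u; rewrite app1 ip_ge0. Qed.

Lemma ip_pow K a b u v : SA K ->
  ip u (app (K ^+ (a + b)) v) = ip (app (K ^+ a) u) (app (K ^+ b) v).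
Proof.
move=> sa; elim: a b => [|a IH] b; first by rewrite expr0 app1 add0n.
by rewrite addSnnS IH !app_exp sa.
Qed.

Lemma c_ge0 K f k : SA K -> PSD K -> 0 <= ip f (app (K ^+ k) f).
Proof.
move=> sa psd; rewrite -(odd_double_half k) -addnn.
case: (odd k) => /=.
  have -> : (1 + (k./2 + k./2) = k./2 + (k./2).+1)%N by rewrite add1n addnS.
  by rewrite ip_pow // app_exp psd.
by rewrite add0n ip_pow // ip_ge0.
Qed.

Definition mz (g : 'I_n -> R) := ip (fun=> 1) g = 0.
Definition fix1 (K : 'M[R]_n) := app K (fun=> 1) = (fun=> 1).

Lemma mz_app K g : SA K -> fix1 K -> mz g -> mz (app K g).
Proof. by rewrite /mz => sa f1 h; rewrite -sa f1. Qed.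

Lemma mz_pow K k g : SA K -> fix1 K -> mz g -> mz (app (K ^+ k) g).
Proof.
move=> sa f1 h; elim: k => [|k IH]; first by rewrite expr0 app1.
by rewrite app_exp; apply: mz_app.
Qed.

Lemma sq_bound A lam : SA A -> PSD A -> fix1 A -> 0 <= lam ->
  (forall g, mz g -> ip g (app A g) <= lam * ip g g) ->
  forall g, mz g -> ip (app A g) (app A g) <= lam ^+ 2 * ip g g.
Proof.
move=> sa psd f1 l0 H g mg.
have h1 := cs g (app A g) sa psd.
rewrite -sa in h1.
have h2 := H g mg.
have h3 := H _ (mz_app sa f1 mg).
have q0 := psd g.
have r0 := psd (app A g).
have s0 := ip_ge0 (app A g).
have G0 := ip_ge0 g.
set s := ip (app A g) (app A g) in h1 h3 s0 *.
set q := ip g (app A g) in h1 h2 q0 *.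
set r := ip (app A g) (app A (app A g)) in h1 h3 r0 *.
set G := ip g g in h2 G0 *.
have : s ^+ 2 <= lam ^+ 2 * G * s.
  apply: (le_trans h1).
  have -> : lam ^+ 2 * G * s = (lam * G) * (lam * s) by ring.
  by apply: ler_pM.
have [->|sp] := eqVneq s 0; first by rewrite mulr_ge0 // sqr_ge0.
have sp' : 0 < s by rewrite lt_def sp s0.
rewrite expr2 ler_pM2r //.
Qed.

Lemma pow_bound A lam f : SA A -> PSD A -> fix1 A -> 0 <= lam ->
  (forall g, mz g -> ip g (app A g) <= lam * ip g g) ->
  mz f -> ip f f = 1 -> forall k, ip f (app (A ^+ k) f) <= lam ^+ k.
Proof.
move=> sa psd f1 l0 H mf f11 k.
have hk : ip (app (A ^+ k) f) (app (A ^+ k) f) <= (lam ^+ 2) ^+ k.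
  elim: k => [|k IH]; first by rewrite expr0 app1 f11 expr0.
  rewrite app_exp; apply: (le_trans (sq_bound sa psd f1 l0 H (mz_pow k sa f1 mf))).
  by rewrite (exprS (lam ^+ 2)); apply: ler_wpM2l => //; exact: sqr_ge0.
have hc := cs f (app (A ^+ k) f) SA1 PSD1.
rewrite !app1 f11 mul1r in hc.
have lk : 0 <= lam ^+ k by exact: exprn_ge0.
rewrite -exprM mulnC exprM in hk.
have := le_trans hc hk.
set c := ip f _.
move=> h; nra.
Qed.

Lemma eig_pow B lam phi : app B phi = (fun x => lam * phi x) ->
  forall k, app (B ^+ k) phi = (fun x => lam ^+ k * phi x).
Proof.
move=> h; elim=> [|k IH]; first by rewrite expr0 app1; apply: funext => x; rewrite mul1r.
rewrite app_exp IH.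
have -> : (fun x => lam ^+ k * phi x) = lc (lam ^+ k) phi (fun=> 0).
  by apply: funext => x; rewrite /lc addr0.
rewrite app_lc h; apply: funext => x; rewrite /lc /app big1 ?addr0.
  by rewrite exprS; ring.
by move=> y _; rewrite mulr0.
Qed.

Lemma eig_c B lam phi k : app B phi = (fun x => lam * phi x) -> ip phi phi = 1 ->
  ip phi (app (B ^+ k) phi) = lam ^+ k.
Proof.
move=> h h1; rewrite (eig_pow h).
have -> : (fun x => lam ^+ k * phi x) = lc (lam ^+ k) phi (fun=> 0).
  by apply: funext => x; rewrite /lc addr0.
rewrite ip_lcr h1 mulr1 /ip big1 ?addr0 //.
by move=> y _; rewrite mulr0.
Qed.
End Alg.

Section Seq.
Variables (R : realType).
Implicit Types (c : nat -> R).

Definition Sq c N : R := \sum_(i < N) \sum_(j < N) c (maxn i j - minn i j)%N.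
Definition E c N : R := \sum_(k < N) c k.+1.
Definition geo (t : R) N : R := \sum_(k < N) t ^+ k.+1.

Lemma Sq_rec c N : Sq c N.+1 = Sq c N + 2 * E c N + c 0%N.
Proof.
rewrite /Sq big_ord_recr /=.
under eq_bigr do rewrite big_ord_recr /=.
rewrite big_split /= big_ord_recr /=.
have h1 : \sum_(i < N) c (maxn (widen_ord (leqnSn N) i) N - minn (widen_ord (leqnSn N) i) N)%N = E c N.
  rewrite /E (reindex_inj rev_ord_inj) /=; apply: eq_bigr => i _.
  have iN : (N - i.+1 <= N)%N by rewrite leq_subr.
  rewrite (maxn_idPr iN) (minn_idPl iN) subKn //.
have h2 : \sum_(i < N) c (maxn N (widen_ord (leqnSn N) i) - minn N (widen_ord (leqnSn N) i))%N = E c N.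
  by rewrite -h1; apply: eq_bigr => i _; rewrite maxnC minnC.
rewrite h1 h2 maxnn minnn subnn; ring.
Qed.

Lemma Sq_closed c N : Sq c N = N%:R * c 0%N + 2 * \sum_(m < N) E c m.
Proof.
elim: N => [|N IH]; first by rewrite /Sq !big_ord0 mul0r mulr0 addr0.
by rewrite Sq_rec IH big_ord_recr /= -natr1; ring.
Qed.

Lemma E_mono c m N : (forall k, 0 <= c k) -> (m <= N)%N -> E c m <= E c N.
Proof.
move=> c0; elim: N => [|N IH]; first by rewrite leqn0 => /eqP ->.
rewrite leq_eqVlt => /orP [/eqP -> //| mN].
by apply: (le_trans (IH mN)); rewrite /E big_ord_recr /= lerDl.
Qed.

Definition av c N : R := Sq c N / N%:R.

Lemma av_mono c N : (forall k, 0 <= c k) -> av c N <= av c N.+1.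
Proof.
move=> c0; rewrite /av; case: N => [|N].
  rewrite invr0 mulr0 divr_ge0 // Sq_closed; apply: addr_ge0;
    [apply: mulr_ge0 | apply: mulr_ge0 => //; apply: sumr_ge0 => m _; apply: sumr_ge0] => //.
set M := N.+1.
have Mp : (0 : R) < M%:R by rewrite ltr0n.
have M1p : (0 : R) < M.+1%:R by rewrite ltr0n.
rewrite ler_pdivrMr // mulrAC ler_pdivlMr // Sq_rec.
have hT : \sum_(m < M) E c m <= M%:R * E c M.
  apply: (@le_trans _ _ (\sum_(m < M) E c M)).
    by apply: ler_sum => m _; apply: E_mono => //; exact: ltnW.
  by rewrite sumr_const card_ord mulr_natl.
rewrite Sq_closed -natr1.
set T := \sum_(m < M) E c m in hT *.
nra.
Qed.

Lemma geo_id t N : (1 - t) * geo t N = t - t ^+ N.+1.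
Proof.
elim: N => [|N IH]; first by rewrite /geo big_ord0 mulr0 expr1 subrr.
rewrite /geo big_ord_recr /= mulrDr -/(geo t N) IH !exprS; ring.
Qed.

Lemma geo_le t N : 0 <= t < 1 -> geo t N <= t / (1 - t).
Proof.
move=> /andP [t0 t1]; rewrite ler_pdivlMr ?subr_gt0 // mulrC geo_id.
by rewrite lerBlDr lerDl exprn_ge0.
Qed.

Lemma geo_ge0 t N : 0 <= t -> 0 <= geo t N.
Proof. by move=> t0; apply: sumr_ge0 => k _; exact: exprn_ge0. Qed.

Lemma av_upper c lam N : c 0%N = 1 -> (forall k, c k <= lam ^+ k) -> 0 <= lam < 1 ->
  av c N <= (1 + lam) / (1 - lam).
Proof.
move=> c01 cl /andP [l0 l1].
have l1p : 0 < 1 - lam by rewrite subr_gt0.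
have hp : 0 <= (1 + lam) / (1 - lam) by apply: divr_ge0; [apply: addr_ge0 | apply: ltW].  
rewrite /av; case: N => [|N]; first by rewrite invr0 mulr0.
set M := N.+1.
have Mp : (0 : R) < M%:R by rewrite ltr0n.
rewrite ler_pdivrMr // Sq_closed c01 mulr1.
have hE : forall m, E c m <= lam / (1 - lam).
  move=> m; apply: le_trans (geo_le m _); last by rewrite l0 l1.
  by apply: ler_sum => k _; apply: cl.
have hT : \sum_(m < M) E c m <= M%:R * (lam / (1 - lam)).
  apply: (@le_trans _ _ (\sum_(m < M) (lam / (1 - lam)))).
    by apply: ler_sum => m _; apply: hE.
  by rewrite sumr_const card_ord mulr_natl.
apply: (le_trans (lerD (lexx _) (ler_wpM2l _ hT))) => //.
rewrite le_eqVlt; apply/orP; left; apply/eqP; field.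
by rewrite gt_eqF.
Qed.

Lemma av_lower c t N : c 0%N = 1 -> (forall k, t ^+ k <= c k) -> 0 <= t < 1 ->
  (0 < N)%N -> (1 + t) / (1 - t) - 2 * t / (1 - t) ^+ 2 / N%:R <= av c N.
Proof.
move=> c01 cl /andP [t0 t1] N0.
have t1p : 0 < 1 - t by rewrite subr_gt0.
have Np : (0 : R) < N%:R by rewrite ltr0n.
rewrite /av ler_pdivlMr // Sq_closed c01 mulr1.
have hE : forall m, (t - t ^+ m.+1) / (1 - t) <= E c m.
  move=> m; rewrite -geo_id mulrC mulKf ?gt_eqF //.
  by apply: ler_sum => k _; apply: cl.
have hT : N%:R * t / (1 - t) - t / (1 - t) ^+ 2 <= \sum_(m < N) E c m.
  apply: (@le_trans _ _ (\sum_(m < N) (t - t ^+ m.+1) / (1 - t))); last first.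
    by apply: ler_sum => m _; exact: hE.
  rewrite -mulr_suml sumrB sumr_const card_ord mulr_natl.
  have := geo_le N (_ : 0 <= t < 1); rewrite t0 t1 => /(_ isT) hg.
  have -> : \sum_(i < N) t ^+ i.+1 = geo t N by [].
  rewrite mulrBl lerD2l lerN2 expr2 invfM mulrA; apply: ler_wpM2r => //.
  by rewrite invr_ge0 ltW.
set T := \sum_(m < N) E c m in hT *.
have e1 : ((1 + t) / (1 - t) - 2 * t / (1 - t) ^+ 2 / N%:R) * N%:R
   = N%:R + 2 * (N%:R * t / (1 - t) - t / (1 - t) ^+ 2).
  by field; rewrite gt_eqF ?Np //= gt_eqF.
rewrite e1; lra.
Qed.


Local Open Scope ereal_scope.
Definition avE c := fun N => (av c N)%:E.

Lemma lim_avE c : (forall k, (0 <= c k)%R) -> limn (avE c) = ereal_sup (range (avE c)).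
Proof.
move=> c0; apply: cvg_lim => //; apply: ereal_nondecreasing_cvgn.
by apply/nondecreasing_seqP => N; rewrite /avE lee_fin av_mono.
Qed.

Lemma sup_upper c lam : c 0%N = 1%R -> (forall k, (c k <= lam ^+ k)%R) -> (0 <= lam < 1)%R ->
  ereal_sup (range (avE c)) <= ((1 + lam) / (1 - lam))%:E.
Proof.
move=> c01 cl hl; apply: ge_ereal_sup => _ [N _ <-].
by rewrite /avE lee_fin av_upper.
Qed.

Lemma sup_lower c t : c 0%N = 1%R -> (forall k, (t ^+ k <= c k)%R) -> (0 <= t < 1)%R ->
  ((1 + t) / (1 - t))%:E <= ereal_sup (range (avE c)).
Proof.
move=> c01 cl ht; apply/lee_addgt0Pr => e e0.
have /andP [t0 t1] := ht.
have t1p : (0 < 1 - t)%R by rewrite subr_gt0.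
set C := (2 * t / (1 - t) ^+ 2)%R.
have C0 : (0 <= C)%R by rewrite /C divr_ge0 ?mulr_ge0 ?exprn_ge0 // ltW.
set N := Num.bound (C / e).
have hN : (C / e < N%:R)%R by apply: archi_boundP; rewrite divr_ge0 // ltW.
have N0 : (0 < N)%N by rewrite /N /Num.bound.
have Np : (0 < N%:R :> R)%R by rewrite ltr0n.
have hl := av_lower c01 cl ht N0.
have hCe : (C / N%:R <= e)%R.
  by rewrite ler_pdivrMr // mulrC -ler_pdivrMr // ltW.
apply: (@le_trans _ _ ((av c N)%:E + e%:E)); last first.
  by rewrite leeD2r //; apply: ereal_sup_ubound; exists N.
rewrite -EFinD lee_fin; rewrite -/C in hl; lra.
Qed.

End Seq.

Section Cont.
Variables (R : realType) (n : nat).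
Local Open Scope classical_set_scope.

Lemma cont_sum (I : Type) (r : seq I) (F : I -> 'rV[R]_n -> R) :
  (forall i, continuous (F i)) -> continuous (fun v => \sum_(i <- r) F i v).
Proof.
move=> Fc; elim: r => [|i r IH].
  under eq_fun do rewrite big_nil; exact: cst_continuous.
under eq_fun do rewrite big_cons.
by move=> v; exact: (@continuousD _ _ _ (F i) (fun v => \sum_(j <- r) F j v) v (Fc i v) (IH v)).
Qed.

Lemma cont_mul (F G : 'rV[R]_n -> R) : continuous F -> continuous G ->
  continuous (fun v => F v * G v).
Proof. by move=> cF cG v; exact: (@continuousM _ _ F G v (cF v) (cG v)). Qed.

Lemma cont_coord i : continuous (fun v : 'rV[R]_n => v ord0 i).
Proof. exact: coord_continuous. Qed.

End Cont.

Section EVT.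
Variables (R : realType) (n : nat) (pi : 'I_n -> R).
Local Open Scope classical_set_scope.
Hypothesis pi_pos : forall x, 0 < pi x.

Definition tof (v : 'rV[R]_n) : 'I_n -> R := fun i => v ord0 i.
Definition rof (f : 'I_n -> R) : 'rV[R]_n := \row_i f i.
Lemma tofK f : tof (rof f) = f.
Proof. by apply: funext => i; rewrite /tof /rof mxE. Qed.

Lemma q_cont A : continuous (fun v => ip pi (tof v) (app A (tof v))).
Proof.
rewrite /ip /app /tof; apply: cont_sum => x.
apply: cont_mul; first apply: cont_mul.
- exact: cst_continuous.
- exact: cont_coord.
apply: cont_sum => y; apply: cont_mul; [exact: cst_continuous | exact: cont_coord].
Qed.

Lemma l_cont (b : bool) : continuous (fun v => if b then ip pi (fun=> 1) (tof v) else 0).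
Proof.
case: b; last exact: cst_continuous.
rewrite /ip /tof; apply: cont_sum => x.
apply: cont_mul; first apply: cont_mul.
- exact: cst_continuous.
- exact: cst_continuous.
exact: cont_coord.
Qed.

Lemma n_cont : continuous (fun v : 'rV[R]_n => ip pi (tof v) (tof v)).
Proof.
rewrite /ip /tof; apply: cont_sum => x.
apply: cont_mul; first apply: cont_mul.
- exact: cst_continuous.
- exact: cont_coord.
exact: cont_coord.
Qed.

Definition Xs (b : bool) := [set v : 'rV[R]_n | ip pi (tof v) (tof v) = 1 /\
   (if b then ip pi (fun=> 1) (tof v) else 0) = 0].

Lemma Xs_closed b : closed (Xs b).
Proof.
have -> : Xs b = (fun v => ip pi (tof v) (tof v)) @^-1` [set 1] `&`
   (fun v => if b then ip pi (fun=> 1) (tof v) else 0) @^-1` [set 0] by [].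
apply: closedI.
  apply: preimage_closed; last exact: closed_eq.
  by move=> v _; apply: n_cont.
apply: preimage_closed; last exact: closed_eq.
by move=> v _; apply: l_cont.
Qed.

Definition cbox : R := 1 + \sum_i (pi i)^-1.

Lemma Xs_box b : Xs b `<=` [set v : 'rV[R]_n | forall i, `[(- cbox), cbox]%classic (v ord0 i)].
Proof.
move=> v [h1 _] i /=.
have hi : pi i * v ord0 i * v ord0 i <= 1.
  rewrite -h1 /ip /tof (bigD1 i) //= lerDl; apply: sumr_ge0 => j _.
  by rewrite -mulrA; apply: mulr_ge0; [exact: ltW | rewrite -expr2 sqr_ge0].
have hs : (pi i)^-1 <= \sum_i (pi i)^-1.
  rewrite (bigD1 i) //= lerDl; apply: sumr_ge0 => j _.
  by rewrite invr_ge0 ltW.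
have hp := pi_pos i.
have hv : v ord0 i * v ord0 i <= (pi i)^-1.
  by rewrite -(ler_pM2l hp) mulfV ?gt_eqF // mulrA.
rewrite in_itv /=; rewrite /cbox; set x := v ord0 i in hv *.
apply/andP; split; nra.
Qed.

Lemma Xs_compact b : compact (Xs b).
Proof.
have hc : compact [set v : 'rV[R]_n | forall i, `[(- cbox), cbox]%classic (v ord0 i)].
  apply: (@rV_compact _ _ (fun=> `[(- cbox), cbox]%classic)).
  by move=> _; apply: segment_compact.
exact: (subclosed_compact (@Xs_closed b) hc (@Xs_box b)).
Qed.

Lemma exists_max (A : 'M[R]_n) (b : bool) : Xs b !=set0 ->
  exists2 v, v \in Xs b & forall w, w \in Xs b ->
    ip pi (tof w) (app A (tof w)) <= ip pi (tof v) (app A (tof v)).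
Proof.
move=> ne; apply: EVT_max_rV => //; first exact: Xs_compact.
by apply: continuous_subspaceT; exact: q_cont.
Qed.


Lemma lin0 (a b : R) : (forall t, a * t ^+ 2 + b * t <= 0) -> b = 0.
Proof.
move=> H; set s := `|a| + 1.
have s0 : 0 < s by rewrite /s ltr_pwDr // normr_ge0.
have aa : 0 <= a + `|a| by have := ler_norm (- a); rewrite normrN; lra.
have h := H (b / s).
have e : b = (b / s) * s by rewrite divfK // gt_eqF.
set u := b / s in h e.
have h' : u ^+ 2 * (a + s) <= 0.
  by move: h; rewrite {1}e; have -> : a * u ^+ 2 + u * s * u = u ^+ 2 * (a + s) by ring.
have : u ^+ 2 <= 0.
  have as1 : 1 <= a + s by rewrite /s; lra.
  nra.
rewrite e; move=> hu; have u0 : u = 0.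
  by apply/eqP; rewrite -sqrf_eq0 eq_le hu sqr_ge0.
by rewrite u0 mul0r.
Qed.

Lemma app0 (A : 'M[R]_n) : app A (fun=> 0) = (fun=> 0 : R).
Proof. by apply: funext => x; rewrite /app big1 // => y _; rewrite mulr0. Qed.

Lemma ip0r (u : 'I_n -> R) : ip pi u (fun=> 0) = 0.
Proof. by rewrite /ip big1 // => y _; rewrite mulr0. Qed.

Lemma ip0l (u : 'I_n -> R) : ip pi (fun=> 0) u = 0.
Proof. by rewrite /ip big1 // => y _; rewrite mulr0 mul0r. Qed.

Lemma lagrange (A : 'M[R]_n) (S : ('I_n -> R) -> Prop) f lam :
  SA pi A ->
  (forall t u v, S u -> S v -> S (lc t u v)) ->
  (forall u, S u -> S (app A u)) ->
  S f ->
  (forall g, S g -> ip pi g (app A g) <= lam * ip pi g g) ->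
  ip pi f (app A f) = lam * ip pi f f ->
  app A f = (fun x => lam * f x).
Proof.
move=> sa Slc SA' Sf H Hf.
have claim : forall g, S g -> ip pi g (app A f) = lam * ip pi g f.
  move=> g Sg.
  have L : 2 * (ip pi g (app A f) - lam * ip pi g f) = 0.
    apply: (@lin0 (ip pi g (app A g) - lam * ip pi g g)) => t.
    have := H _ (Slc t g f Sg Sf).
    rewrite app_lc !ip_lcl !ip_lcr.
    have -> : ip pi f (app A g) = ip pi g (app A f) by rewrite -sa ip_sym.
    have -> : ip pi f g = ip pi g f by rewrite ip_sym.
    rewrite Hf => h; lra.
  by apply/eqP; rewrite -subr_eq0; move/eqP: L; rewrite mulf_eq0 pnatr_eq0.
set h := lc (- lam) f (app A f).
have Sh : S h by apply: Slc => //; apply: SA'.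
have hh : ip pi h h = 0.
  rewrite {2}/h ip_lcr claim //; ring.
apply: funext => x; have := ip_eq0 pi_pos hh x; rewrite /h /lc => /eqP.
by rewrite mulNr addrC subr_eq0 => /eqP ->.
Qed.

Lemma homog (A : 'M[R]_n) (S : ('I_n -> R) -> Prop) lam :
  (forall t u v, S u -> S v -> S (lc t u v)) ->
  (forall g, S g -> ip pi g g = 1 -> ip pi g (app A g) <= lam) ->
  forall g, S g -> ip pi g (app A g) <= lam * ip pi g g.
Proof.
move=> Slc H g Sg.
have [g0|gn0] := eqVneq (ip pi g g) 0.
  have -> : g = (fun=> 0) by apply: funext => x /=; move: x; exact: (ip_eq0 pi_pos g0).
  by rewrite app0 ip0r mulr0.
have gp : 0 < ip pi g g by rewrite lt_def gn0 ip_ge0.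
set s := Num.sqrt (ip pi g g).
have sp : 0 < s by rewrite sqrtr_gt0.
have ss : s * s = ip pi g g by rewrite -expr2 sqr_sqrtr // ltW.
have S0 : S (fun=> 0).
  have -> : (fun=> 0) = lc (-1) g g by apply: funext => x; rewrite /lc; ring.
  by apply: Slc.
set g' := lc s^-1 g (fun=> 0).
have h := H g' (Slc _ _ _ Sg S0).
rewrite /g' app_lc app0 !ip_lcl !ip_lcr !ip0r !ip0l !mulr0 !addr0 in h.
have e1 : s^-1 * (s^-1 * ip pi g g) = 1 by rewrite -ss; field; rewrite gt_eqF.
have := h e1.
rewrite -ss => h2.
have -> : ip pi g (app A g) = (s * s) * (s^-1 * (s^-1 * ip pi g (app A g))).
  by field; rewrite gt_eqF.
by rewrite mulrC ler_wpM2r // ?mulr_ge0 // ltW.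
Qed.


Lemma max_eig (A : 'M[R]_n) (b : bool) : SA pi A -> (b -> fix1 A) ->
  (exists f, ip pi f f = 1 /\ (b -> mz pi f)) ->
  exists f, exists lam, [/\ ip pi f f = 1, b -> mz pi f,
     app A f = (fun x => lam * f x) &
     forall g, (b -> mz pi g) -> ip pi g (app A g) <= lam * ip pi g g].
Proof.
move=> sa f1 [f0 [f01 f0m]].
set S := fun g => b -> mz pi g.
have Slc : forall t u v, S u -> S v -> S (lc t u v).
  move=> t u v Su Sv bb; rewrite /mz ip_lcr.
  by rewrite (Su bb) (Sv bb) mulr0 addr0.
have SA' : forall u, S u -> S (app A u).
  by move=> u Su bb; apply: mz_app => //; [exact: f1 | exact: Su].
have XsS : forall g, ip pi g g = 1 -> S g -> Xs b (rof g).
  move=> g g1 Sg; rewrite /Xs /= tofK; split => //.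
  by move: Sg; rewrite /S; case: (b) => // /(_ isT).
have ne : Xs b !=set0 by exists (rof f0); apply: XsS.
have [v vX vmax] := exists_max A ne.
rewrite inE in vX; case: vX => v1 vb.
set f := tof v in v1 vb.
have Sf : S f by move=> bb; move: vb; rewrite bb.
have Hg : forall g, S g -> ip pi g (app A g) <= ip pi f (app A f) * ip pi g g.
  apply: homog => // g Sg g1.
  have := vmax (rof g); rewrite inE tofK; apply; exact: XsS.
exists f, (ip pi f (app A f)); split => //.
apply: (lagrange sa Slc SA' Sf Hg).
by rewrite v1 mulr1.
Qed.

End EVT.

Section Kern.
Variables (R : realType) (n : nat) (pi : 'I_n -> R).
Hypothesis pi_pos : forall x, 0 < pi x.

Lemma rev_SA (K : 'M[R]_n) : reversible pi K -> SA pi K.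
Proof.
move=> rv u v; rewrite /ip /app.
transitivity (\sum_x \sum_y pi x * K x y * u y * v x).
  by apply: eq_bigr => x _; rewrite mulrAC mulr_sumr; apply: eq_bigr => y _; ring.
transitivity (\sum_y \sum_x pi x * u x * K x y * v y); last first.
  by rewrite exchange_big /=; apply: eq_bigr => x _; rewrite mulr_sumr; apply: eq_bigr => y _; ring.
apply: eq_bigr => x _; apply: eq_bigr => y _.
by rewrite (rv x y); ring.
Qed.

Lemma sto_fix1 (K : 'M[R]_n) : stochastic K -> fix1 K.
Proof.
move=> [_ h]; apply: funext => x /=; rewrite /app.
by rewrite -[RHS](h x); apply: eq_bigr => y _; rewrite mulr1.
Qed.

Lemma jensen (w a : 'I_n -> R) : (forall y, 0 <= w y) -> \sum_y w y = 1 ->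
  (\sum_y w y * a y) ^+ 2 <= \sum_y w y * a y ^+ 2.
Proof.
move=> w0 w1; set m := \sum_y w y * a y.
have h : 0 <= \sum_y w y * (a y - m) ^+ 2.
  by apply: sumr_ge0 => y _; apply: mulr_ge0 => //; exact: sqr_ge0.
have e : forall m', \sum_y w y * (a y - m') ^+ 2 =
    \sum_y w y * a y ^+ 2 - 2 * m' * (\sum_y w y * a y) + m' ^+ 2 * \sum_y w y.
  move=> m'; rewrite !mulr_sumr -sumrN -!big_split /=; apply: eq_bigr => y _; ring.
rewrite e -/m w1 in h; lra.
Qed.

Lemma contraction (K : 'M[R]_n) g : stochastic K -> reversible pi K ->
  ip pi (app K g) (app K g) <= ip pi g g.
Proof.
move=> [K0 K1] rv.
have sa := rev_SA rv.
have f1 := sto_fix1 (conj K0 K1).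
set g2 := fun y => g y ^+ 2.
have e : ip pi g g = ip pi (fun=> 1) (app K g2).
  rewrite -sa f1 /ip; apply: eq_bigr => x _; rewrite /g2; ring.
rewrite e /ip /app /=; apply: ler_sum => x _ /=.
rewrite mulr1 -mulrA; apply: ler_wpM2l; first exact: ltW.
by rewrite -expr2; exact: jensen.
Qed.

Lemma app_mul3 (A B C : 'M[R]_n) g : app (A *m B *m C) g = app A (app B (app C g)).
Proof. by rewrite !app_mul. Qed.

Lemma comp_SA (K P : 'M[R]_n) : SA pi K -> SA pi P -> SA pi (K *m P *m K).
Proof. by move=> sK sP u v; rewrite !app_mul3 sK sP sK. Qed.

Lemma comp_PSD (K P : 'M[R]_n) : SA pi K -> PSD pi P -> PSD pi (K *m P *m K).
Proof. by move=> sK pP u; rewrite app_mul3 -sK. Qed.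

Lemma comp_fix1 (K P : 'M[R]_n) : fix1 K -> fix1 P -> fix1 (K *m P *m K).
Proof. by rewrite /fix1 => fK fP; rewrite app_mul3 fK fP fK. Qed.


Lemma app_opp (P : 'M[R]_n) u : app (- P) u = (fun x => - app P u x).
Proof.
apply: funext => x; rewrite /app -sumrN; apply: eq_bigr => y _.
by rewrite mxE mulNr.
Qed.

Lemma ipNr u v : ip pi u (fun x => - v x) = - ip pi u v.
Proof. by rewrite /ip -sumrN; apply: eq_bigr => x _; rewrite mulrN. Qed.

Lemma ipNl u v : ip pi (fun x => - u x) v = - ip pi u v.
Proof. by rewrite ip_sym ipNr ip_sym. Qed.

Lemma unit_vec (x0 : 'I_n) : exists f, ip pi f f = 1.
Proof.
set s := Num.sqrt (pi x0).
have sp : 0 < s by rewrite sqrtr_gt0.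
have ss : s * s = pi x0 by rewrite -expr2 sqr_sqrtr // ltW.
exists (fun x => if x == x0 then s^-1 else 0).
rewrite /ip (bigD1 x0) //= eqxx big1 ?addr0.
  by rewrite -ss; field; rewrite gt_eqF.
by move=> y /negbTE ->; rewrite mulr0.
Qed.

Lemma psd_of_spec (P : 'M[R]_n) : reversible pi P -> nonneg_spectrum P ->
  (exists x0 : 'I_n, True) -> PSD pi P.
Proof.
move=> rv ns [x0 _].
have sa := rev_SA rv.
have saN : SA pi (- P).
  by move=> u v; rewrite !app_opp ipNl ipNr sa.
have [f1 f11] := unit_vec x0.
have [f [lam [h1 _ eig Hg]]] := @max_eig R n pi pi_pos (- P) false saN (fun b => False_ind _ (notF b))
   (ex_intro _ f1 (conj f11 (fun b => False_ind _ (notF b)))).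
have eigP : app P f = (fun x => - lam * f x).
  apply: funext => x; have := congr1 (fun h => h x) eig; rewrite app_opp /= => e.
  by rewrite mulNr -e opprK.
have : eigenvalue P (- lam).
  apply/eigenvalueP; exists (\row_x (pi x * f x)).
    apply/rowP => y; rewrite !mxE.
    have := congr1 (fun h => h y) eigP; rewrite /app /= => e.
    rewrite mulrCA -e mulr_sumr; apply: eq_bigr => x _.
    by rewrite mxE mulrAC (rv x y); ring.
  apply/negP => /eqP h0.
  have fz : forall x, f x = 0.
    move=> x; have := congr1 (fun M : 'rV_n => M ord0 x) h0; rewrite !mxE => /eqP.
    by rewrite mulf_eq0 gt_eqF //= => /eqP.
  move: h1; rewrite /ip big1 ?fz => [/eqP|x _]; first by rewrite eq_sym oner_eq0.
  by rewrite fz !mulr0.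
move=> /ns; rewrite oppr_ge0 => l0 u.
have := Hg u (fun b => False_ind _ (notF b)).
rewrite app_opp ipNr => h.
have := ip_ge0 pi_pos u; nra.
Qed.

End Kern.

Section Compare.
Variables (R : realType) (n : nat) (pi : 'I_n -> R).
Hypothesis pi_pos : forall x, 0 < pi x.

Lemma mzE f : mean_zero pi f <-> mz pi f.
Proof.
rewrite /mean_zero /mz /ip.
have -> : \sum_x pi x * 1 * f x = \sum_x f x * pi x by apply: eq_bigr => x _; ring.
by [].
Qed.

Lemma n2E f : pi_norm2 pi f = ip pi f f.
Proof. by rewrite /pi_norm2 /ip; apply: eq_bigr => x _; ring. Qed.

Lemma c_conv (K : 'M[R]_n) f m :
  \sum_x \sum_y pi x * f x * (K ^+ m) x y * f y = ip pi f (app (K ^+ m) f).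
Proof.
rewrite /ip /app; apply: eq_bigr => x _; rewrite mulr_sumr.
by apply: eq_bigr => y _; ring.
Qed.

Lemma asym_conv (K : 'M[R]_n) f : mean_zero pi f ->
  asym_var pi K f = limn (avE (fun m => ip pi f (app (K ^+ m) f))).
Proof.
move=> mf; rewrite /asym_var; congr (limn _); apply: funext => N.
rewrite /avE /av /var_sum mf mulr0 expr0n subr0 /Sq; congr ((_ / _)%:E).
by apply: eq_bigr => i _; apply: eq_bigr => j _; rewrite c_conv.
Qed.

Local Open Scope ereal_scope.

Lemma compare (A B : 'M[R]_n) : SA pi A -> PSD pi A -> fix1 A ->
  SA pi B -> PSD pi B -> fix1 B ->
  (forall lam, (0 <= lam)%R -> (forall g, mz pi g -> (ip pi g (app B g) <= lam * ip pi g g)%R) ->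
     forall g, mz pi g -> (ip pi g (app A g) <= lam * ip pi g g)%R) ->
  worst_var pi A <= worst_var pi B.
Proof.
move=> saA psA fA saB psB fB H.
apply: ge_ereal_sup => _ [f [mf nf] <-].
have mzf : mz pi f by apply/mzE.
rewrite n2E in nf.
have [phi [lam [p1 pm eig Hg]]] := @max_eig R n pi pi_pos B true saB (fun=> fB)
   (ex_intro _ f (conj nf (fun=> mzf))).
have pmz := pm isT.
have Hg' : forall g, mz pi g -> (ip pi g (app B g) <= lam * ip pi g g)%R.
  by move=> g mg; apply: Hg.
have l0 : (0 <= lam)%R.
  have := psB phi; rewrite eig.
  have -> : (fun x => lam * phi x)%R = lc lam phi (fun=> 0%R).
    by apply: funext => x; rewrite /lc addr0.
  by rewrite ip_lcr ip0r p1 addr0 mulr1.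
have HA := H lam l0 Hg'.
set cA := fun m => ip pi f (app (A ^+ m) f).
set cB := fun m => ip pi phi (app (B ^+ m) phi).
have cA0 : forall k, (0 <= cA k)%R by move=> k; exact: c_ge0.
have cB0 : forall k, (0 <= cB k)%R by move=> k; exact: c_ge0.
have cBe : forall k, cB k = (lam ^+ k)%R by move=> k; exact: eig_c.
have cA00 : cA 0%N = 1%R by rewrite /cA expr0 app1.
have cAle : forall k, (cA k <= lam ^+ k)%R by move=> k; exact: pow_bound.
have supB : ereal_sup (range (avE cB)) <= worst_var pi B.
  rewrite -lim_avE // -asym_conv; last by apply/mzE.
  apply: ereal_sup_ubound; exists phi => //; split; [exact/mzE | by rewrite n2E].
rewrite asym_conv // lim_avE //.
apply: ge_ereal_sup => _ [N _ <-].
apply: le_trans supB.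
have [l1|l1] := ltP lam 1%R.
  have hl : (0 <= lam < 1)%R by rewrite l0 l1.
  apply: (@le_trans _ _ (((1 + lam) / (1 - lam))%R)%:E).
    by rewrite /avE lee_fin av_upper.
  by apply: sup_lower => // k; rewrite cBe.
set r := av cA N.
set x := Num.max r 0%R.
have x0 : (0 <= x)%R by rewrite /x le_max lexx orbT.
have xr : (r <= x)%R by rewrite /x le_max lexx.
set t := (x / (x + 2))%R.
have x2 : (0 < x + 2)%R by rewrite ltr_wpDl.
have t0 : (0 <= t)%R by rewrite /t divr_ge0 // ltW.
have t1 : (t < 1)%R by rewrite /t ltr_pdivrMr // mul1r ltrDl.
have ht : ((1 + t) / (1 - t))%R = (x + 1)%R.
  rewrite /t; field; rewrite ?gt_eqF //.
  have -> : (x + 2 - x = 2)%R by ring.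
  by [].
apply: (@le_trans _ _ (((1 + t) / (1 - t))%R)%:E).
  by rewrite ht /avE lee_fin -/r; lra.
apply: sup_lower => //; last by rewrite t0 t1.
move=> k; rewrite cBe; apply: lerXn2r; rewrite ?nnegrE //; lra.
Qed.

End Compare.

Section Orbit.
Variables (R : realType) (n : nat) (pi : 'I_n -> R).
Hypothesis pi_pos : forall x, 0 < pi x.
Variables (Gt : Type) (mul : Gt -> Gt -> Gt) (one : Gt) (inv : Gt -> Gt)
  (act : Gt -> 'I_n -> 'I_n).
Hypothesis grp : is_group mul one inv.
Hypothesis actn : is_action mul one act.

Local Notation O := (orbit_of act).

Lemma orbP x y : reflect (exists g, act g x = y) (y \in O x).
Proof. by rewrite inE; exact: asboolP. Qed.

Lemma orb_refl x : x \in O x.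
Proof. by apply/orbP; exists one; case: actn. Qed.

Lemma orb_eq x y : y \in O x -> O y = O x.
Proof.
case: actn => a1 am; case: grp => gA g1l g1r gVl gVr.
move=> /orbP [g <-]; apply/setP => z; apply/orbP/orbP => [[h <-]|[h <-]].
  by exists (mul h g); rewrite am.
exists (mul h (inv g)); rewrite -am -gA gVl g1r //.
Qed.

Lemma orb_sym x y : y \in O x -> x \in O y.
Proof. by move=> h; rewrite (orb_eq h) orb_refl. Qed.

Definition Zo x : R := \sum_(z in O x) pi z.

Lemma Zo_pos x : 0 < Zo x.
Proof.
rewrite /Zo (bigD1 x) ?orb_refl //= ltr_pwDl // sumr_ge0 // => z _.
exact: ltW.
Qed.

Local Notation G := (gibbs_kernel pi O).

Lemma GE x y : G x y = if y \in O x then pi y / Zo x else 0.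
Proof. by rewrite mxE. Qed.

Lemma G_sto : stochastic G.
Proof.
split.
  move=> x y; rewrite GE; case: ifP => // _.
  by rewrite divr_ge0 // ltW // Zo_pos.
move=> x; under eq_bigr do rewrite GE.
by rewrite -big_mkcond /= -mulr_suml -/(Zo x) divff // gt_eqF // Zo_pos.
Qed.

Lemma G_rev : reversible pi G.
Proof.
move=> x y; rewrite !GE.
case: (boolP (y \in O x)) => h.
  rewrite (orb_sym h) /Zo (orb_eq h); ring.
have -> : (x \in O y) = false.
  by apply/negbTE; apply: contra h; exact: orb_sym.
by rewrite !mulr0.
Qed.

Lemma KG (K : 'M[R]_n) : stochastic K -> (forall x y, K x y != 0 -> y \in O x) ->
  K *m G = G.
Proof.
move=> [_ K1] supp; apply/matrixP => x z; rewrite mxE.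
transitivity (\sum_y K x y * G x z).
  apply: eq_bigr => y _.
  have [->|nz] := eqVneq (K x y) 0; first by rewrite !mul0r.
  by rewrite !GE /Zo (orb_eq (supp _ _ nz)).
by rewrite -mulr_suml K1 mul1r.
Qed.

Variable acc : R -> R -> R.
Hypothesis acc_ge0 : forall a b, 0 < a -> 0 < b -> 0 <= acc a b.
Hypothesis acc_le1 : forall a b, 0 < a -> 0 < b -> acc a b <= 1.
Hypothesis acc_sym : forall a b, 0 < a -> 0 < b -> a * acc a b = b * acc b a.

Local Notation K := (orbit_mh_kernel acc pi O).

Definition off x y := if (y \in O x) && (y != x)
                 then (#|O x|.-1)%:R^-1 * acc (pi x) (pi y) else 0.

Lemma KE x y : K x y = if y == x then 1 - \sum_(z | z != x) off x z else off x y.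
Proof. by rewrite mxE. Qed.

Lemma off_ge0 x y : 0 <= off x y.
Proof.
rewrite /off; case: ifP => // _.
by rewrite mulr_ge0 ?invr_ge0 ?ler0n // acc_ge0.
Qed.

Lemma off_sum x : \sum_(z | z != x) off x z <= 1.
Proof.
set c := (#|O x|.-1)%:R^-1 : R.
have e : \sum_(z | z != x) off x z = \sum_(z in O x :\ x) c * acc (pi x) (pi z).
  rewrite big_mkcond [RHS]big_mkcond /=; apply: eq_bigr => z _.
  rewrite in_setD1 /off; case: (z != x) => //=; by rewrite andbT.
rewrite e; apply: (@le_trans _ _ (\sum_(z in O x :\ x) c)).
  apply: ler_sum => z _; rewrite -[X in _ <= X]mulr1 ler_wpM2l ?acc_le1 //.
  by rewrite /c invr_ge0 ler0n.
rewrite sumr_const.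
have hc : #|O x :\ x| = #|O x|.-1 by rewrite [in RHS](cardsD1 x) orb_refl.
rewrite hc /c; case: (#|O x|.-1) => [|k]; first by rewrite mulr0n ler01.
by rewrite -(mulr_natr (k.+1%:R^-1)) mulVf // pnatr_eq0.
Qed.

Lemma K_sto : stochastic K.
Proof.
split.
  move=> x y; rewrite KE; case: ifP => _; last exact: off_ge0.
  by rewrite subr_ge0 off_sum.
move=> x; rewrite (bigD1 x) //= KE eqxx.
have -> : \sum_(i < n | i != x) K x i = \sum_(i | i != x) off x i.
  by apply: eq_bigr => y /negbTE yx; rewrite KE yx.
by rewrite subrK.
Qed.

Lemma K_rev : reversible pi K.
Proof.
move=> x y; rewrite !KE.
have [->|yx] := eqVneq y x; first by [].
have xy : x != y by rewrite eq_sym.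
rewrite /off yx xy !andbT.
case: (boolP (y \in O x)) => h.
  by rewrite (orb_sym h) (orb_eq h) mulrCA acc_sym // mulrCA.
have -> : (x \in O y) = false.
  by apply/negP => /orb_sym; apply/negP: h.
by rewrite !mulr0.
Qed.

Lemma K_supp x y : K x y != 0 -> y \in O x.
Proof.
rewrite KE; have [->|yx] := eqVneq y x; first by rewrite orb_refl.
rewrite /off yx andbT; case: ifP => //; by rewrite eqxx.
Qed.

End Orbit.

Section Acc.
Variable R : realType.

Definition accM (a b : R) := Num.min 1 (b / a).
Definition accB (a b : R) := b / (a + b).

Lemma accM_ge0 a b : 0 < a -> 0 < b -> 0 <= accM a b.
Proof. by move=> a0 b0; rewrite /accM le_min ler01 divr_ge0 // ltW. Qed.

Lemma accM_le1 a b : 0 < a -> 0 < b -> accM a b <= 1.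
Proof. by move=> a0 b0; rewrite /accM ge_min lexx. Qed.

Lemma accM_sym a b : 0 < a -> 0 < b -> a * accM a b = b * accM b a.
Proof.
move=> a0 b0; rewrite /accM.
have [ab|ba] := leP a b.
  rewrite (min_l (_ : 1 <= b / a)); last by rewrite ler_pdivlMr // mul1r.
  rewrite (min_r (_ : a / b <= 1)); last by rewrite ler_pdivrMr // mul1r.
  by rewrite mulr1 mulrC divfK // gt_eqF.
rewrite (min_r (_ : b / a <= 1)); last by rewrite ler_pdivrMr // mul1r ltW.
rewrite (min_l (_ : 1 <= a / b)); last by rewrite ler_pdivlMr // mul1r ltW.
by rewrite mulr1 mulrC divfK // gt_eqF.
Qed.

Lemma accB_ge0 a b : 0 < a -> 0 < b -> 0 <= accB a b.
Proof. by move=> a0 b0; rewrite /accB divr_ge0 // ltW // addr_gt0. Qed.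

Lemma accB_le1 a b : 0 < a -> 0 < b -> accB a b <= 1.
Proof. by move=> a0 b0; rewrite /accB ler_pdivrMr ?addr_gt0 // mul1r lerDr ltW. Qed.

Lemma accB_sym a b : 0 < a -> 0 < b -> a * accB a b = b * accB b a.
Proof. by move=> a0 b0; rewrite /accB addrC; ring. Qed.

End Acc.

Theorem proposition4p2 (R : realType) (n : nat) (pi : 'I_n -> R) (P : 'M[R]_n)
  (Gt : Type) (mul : Gt -> Gt -> Gt) (one : Gt) (inv : Gt -> Gt)
  (act : Gt -> 'I_n -> 'I_n) :
  full_support_pmf pi ->
  stochastic P -> reversible pi P -> ergodic P -> nonneg_spectrum P ->
  is_group mul one inv -> is_action mul one act ->
  let G := gibbs_kernel pi (orbit_of act) in
  let M := metropolis_kernel pi (orbit_of act) in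
  let B := barker_kernel pi (orbit_of act) in
  [/\ (worst_var pi (G *m P *m G) <= worst_var pi (M *m P *m M))%E,
      (worst_var pi (M *m P *m M) <= worst_var pi P)%E,
      (worst_var pi (G *m P *m G) <= worst_var pi (B *m P *m B))%E &
      (worst_var pi (B *m P *m B) <= worst_var pi P)%E].
Proof.
move=> [pi_pos pi1] sP rP _ nsP grp actn G M B.
have n0 : exists x0 : 'I_n, True.
  case: (pickP (fun _ : 'I_n => true)) => [x0 _|h]; first by exists x0.
  move: pi1; rewrite big1 => [/eqP|x _]; first by rewrite eq_sym oner_eq0.
  by have := h x.
have saP := rev_SA rP.
have fP := sto_fix1 sP.
have psP := psd_of_spec pi_pos rP nsP n0.
have sG := G_sto pi_pos actn.
have rG := G_rev pi grp actn.
have saG := rev_SA rG.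
have fG := sto_fix1 sG.
have step : forall K : 'M[R]_n, stochastic K -> reversible pi K -> K *m G = G ->
  (worst_var pi (G *m P *m G) <= worst_var pi (K *m P *m K))%E /\
  (worst_var pi (K *m P *m K) <= worst_var pi P)%E.
  move=> K sK rK KG'.
  have saK := rev_SA rK.
  have fK := sto_fix1 sK.
  split.
    apply: compare => //.
    - exact: comp_SA.
    - exact: comp_PSD.
    - exact: comp_fix1.
    - exact: comp_SA.
    - exact: comp_PSD.
    - exact: comp_fix1.
    move=> lam l0 HB g mg.
    rewrite app_mul3 -saG.
    set h := app G g.
    have Kh : app K h = h by rewrite /h -app_mul KG'.
    have mh : mz pi h by apply: mz_app.
    rewrite -{1 2}Kh saK -app_mul3.
    apply: (le_trans (HB h mh)); apply: ler_wpM2l => //.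
    exact: contraction.
  apply: compare => //.
  - exact: comp_SA.
  - exact: comp_PSD.
  - exact: comp_fix1.
  move=> lam l0 HP g mg.
  rewrite app_mul3 -saK.
  apply: (le_trans (HP _ (mz_app saK fK mg))); apply: ler_wpM2l => //.
  exact: contraction.
have [h1 h2] := step M (K_sto pi_pos actn (@accM_ge0 R) (@accM_le1 R))
  (K_rev pi_pos grp actn (@accM_sym R))
  (KG pi grp actn (K_sto pi_pos actn (@accM_ge0 R) (@accM_le1 R))
      (@K_supp R n pi Gt mul one act actn (@accM R))).
have [h3 h4] := step B (K_sto pi_pos actn (@accB_ge0 R) (@accB_le1 R))
  (K_rev pi_pos grp actn (@accB_sym R))
  (KG pi grp actn (K_sto pi_pos actn (@accB_ge0 R) (@accB_le1 R))
      (@K_supp R n pi Gt mul one act actn (@accB R))).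
by split.
Qed.
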